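(* Let $A$ be a finite ring with unity (not necessarily associative or commutative), let $E$ be a set, and consider the ring $A^E$ with pointwise operations. For $X\subseteq A^E$ set $\mathcal{R}(X)=X\cup\{-1,0,1\}\cup\{x+y : x,y\in X\}\cup\{xy : x,y\in X\}$. Let $(\mathscr{X}_i)_{i\in\mathbf{N}}$ be an increasing sequence of subsets of $A^E$ such that $\mathcal{R}(\mathscr{X}_i)\subseteq\mathscr{X}_{i+1}$ for all $i$ and $\bigcup_{i\in\mathbf{N}}\mathscr{X}_i=A^E$. Then $A^E=\mathscr{X}_i$ for some $i$. *)

(* Defs.v *)
From mathcomp Require Import all_boot.
Set Implicit Arguments. Unset Strict Implicit. Unset Printing Implicit Defensive.

Record naRing (A : Type) := NARing {
  na_add : A -> A -> A;
  na_zero : A;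
  na_opp : A -> A;
  na_mul : A -> A -> A;
  na_one : A;
  na_addA : associative na_add;
  na_addC : commutative na_add;
  na_add0r : left_id na_zero na_add;
  na_addNr : forall x, na_add (na_opp x) x = na_zero;
  na_mulDl : left_distributive na_mul na_add;
  na_mulDr : right_distributive na_mul na_add;
  na_mul1r : left_id na_one na_mul;
  na_mulr1 : right_id na_one na_mul
}.

Definition pw_add A (R : naRing A) E (x y : E -> A) : E -> A :=
  fun e => na_add R (x e) (y e).
Definition pw_mul A (R : naRing A) E (x y : E -> A) : E -> A :=
  fun e => na_mul R (x e) (y e).
Definition pw_const A E (a : A) : E -> A := fun _ => a.

Definition Rclos A (R : naRing A) E (X : (E -> A) -> Prop) : (E -> A) -> Prop :=
  fun f =>
    X f
    \/ f = @pw_const A E (na_opp R (na_one R))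
    \/ f = @pw_const A E (na_zero R)
    \/ f = @pw_const A E (na_one R)
    \/ (exists x y, X x /\ X y /\ f = pw_add R x y)
    \/ (exists x y, X x /\ X y /\ f = pw_mul R x y).

(* Main.v *)
Require Import Defs.
From mathcomp Require Import all_boot.
From mathcomp Require Import zify.
From Stdlib Require Import ClassicalEpsilon Classical FunctionalExtensionality.

Set Implicit Arguments. Unset Strict Implicit. Unset Printing Implicit Defensive.

Notation emi := excluded_middle_informative.

Lemma na_addr0 A (R : naRing A) x : na_add R x (na_zero R) = x.
Proof. by rewrite na_addC na_add0r. Qed.
Lemma na_addrN A (R : naRing A) x : na_add R x (na_opp R x) = na_zero R.
Proof. by rewrite na_addC na_addNr. Qed.
Lemma na_addKr A (R : naRing A) a b : na_add R (na_opp R a) (na_add R a b) = b.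
Proof. by rewrite na_addA na_addNr na_add0r. Qed.
Lemma na_addI A (R : naRing A) a b c : na_add R a b = na_add R a c -> b = c.
Proof. by move=> H; rewrite -(na_addKr R a b) H na_addKr. Qed.
Lemma na_mulr0 A (R : naRing A) x : na_mul R x (na_zero R) = na_zero R.
Proof.
apply: (@na_addI _ R (na_mul R x (na_zero R))).
by rewrite na_addr0 -na_mulDr na_add0r.
Qed.
Lemma na_mul0r A (R : naRing A) x : na_mul R (na_zero R) x = na_zero R.
Proof.
apply: (@na_addI _ R (na_mul R (na_zero R) x)).
by rewrite na_addr0 -na_mulDl na_add0r.
Qed.

Definition Xhyp A (R : naRing A) E (X : nat -> (E -> A) -> Prop) :=
  (forall i f, X i f -> X i.+1 f) /\ (forall i f, Rclos R (X i) f -> X i.+1 f).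

Definition supp_in A (R : naRing A) E (f : E -> A) (Z : E -> Prop) :=
  forall e, ~ Z e -> f e = na_zero R.
Definition good A (R : naRing A) E (X : nat -> (E -> A) -> Prop) (Z : E -> Prop) :=
  exists i, forall g, supp_in R g Z -> X i g.
Definition ind A (R : naRing A) E (Z : E -> Prop) : E -> A :=
  fun e => if emi (Z e) then na_one R else na_zero R.

Lemma Xmono A (R : naRing A) E X (H : @Xhyp A R E X) i j f : i <= j -> X i f -> X j f.
Proof.
move=> lij Hf; rewrite -(subnKC lij).
elim: (j - i) => [|d IH]; first by rewrite addn0.
by rewrite addnS; apply: H.1.
Qed.

Lemma Xadd A (R : naRing A) E X (H : @Xhyp A R E X) i x y :
  X i x -> X i y -> X i.+1 (pw_add R x y).
Proof. by move=> Hx Hy; apply: H.2; do 4 right; left; exists x, y. Qed.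
Lemma Xmul A (R : naRing A) E X (H : @Xhyp A R E X) i x y :
  X i x -> X i y -> X i.+1 (pw_mul R x y).
Proof. by move=> Hx Hy; apply: H.2; do 5 right; exists x, y. Qed.
Lemma Xzero A (R : naRing A) E X (H : @Xhyp A R E X) :
  X 1 (@pw_const A E (na_zero R)).
Proof. by apply: H.2; do 2 right; left. Qed.

Lemma const_bound (A : finType) (R : naRing A) E X (H : @Xhyp A R E X)
  (Xcover : forall f : E -> A, exists i, X i f) :
  exists C, forall a : A, X C (@pw_const A E a).
Proof.
have: forall s : seq A, exists C, forall a, a \in s -> X C (@pw_const A E a).
  elim => [|a s [C HC]]; first by exists 0.
  have [i Hi] := Xcover (@pw_const A E a).
  exists (maxn i C) => b; rewrite in_cons => /orP [/eqP -> | bs].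
    exact: (Xmono H (leq_maxl _ _)).
  exact: (Xmono H (leq_maxr _ _) (HC _ bs)).
case/(_ (enum A)) => C HC; exists C => a; apply: HC; by rewrite mem_enum.
Qed.

Lemma good_mono A (R : naRing A) E X (Z W : E -> Prop) :
  (forall e, Z e -> W e) -> good R X W -> good R X Z.
Proof.
move=> ZW [i Hi]; exists i => g Hg; apply: Hi => e We; apply: Hg => Ze; exact: We (ZW _ Ze).
Qed.

Lemma good_union A (R : naRing A) E X (H : @Xhyp A R E X) (Z W : E -> Prop) :
  good R X Z -> good R X W -> good R X (fun e => Z e \/ W e).
Proof.
move=> [i Hi] [j Hj]; exists (maxn i j).+1 => g Hg.
pose g1 := fun e => if emi (Z e) then g e else na_zero R.
pose g2 := fun e => if emi (Z e) then na_zero R else g e.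
have -> : g = pw_add R g1 g2.
  apply: functional_extensionality => e; rewrite /pw_add /g1 /g2.
  case: (emi (Z e)) => ?; [by rewrite na_addr0 | by rewrite na_add0r].
apply: Xadd => //.
  apply: (Xmono H (leq_maxl _ _)); apply: Hi => e Ze; rewrite /g1.
  by case: (emi (Z e)).
apply: (Xmono H (leq_maxr _ _)); apply: Hj => e We; rewrite /g2.
case: (emi (Z e)) => // nZ; apply: Hg; tauto.
Qed.

Lemma good_empty A (R : naRing A) E X (H : @Xhyp A R E X) (Z : E -> Prop) :
  (forall e, ~ Z e) -> good R X Z.
Proof.
move=> nZ; exists 1 => g Hg.
have -> : g = @pw_const A E (na_zero R).
  by apply: functional_extensionality => e; apply: Hg.
exact: Xzero.
Qed.

Lemma fibres (A : finType) (R : naRing A) E X (H : @Xhyp A R E X) (Rs : E -> Prop) :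
  ~ good R X Rs -> forall f : E -> A, exists a, ~ good R X (fun e => Rs e /\ f e = a).
Proof.
move=> Hbad f; apply: NNPP => Hn; apply: Hbad.
have Hall : forall a, good R X (fun e => Rs e /\ f e = a).
  by move=> a; apply: NNPP => Hna; apply: Hn; exists a.
have: forall s : seq A, good R X (fun e => Rs e /\ f e \in s).
  elim => [|a s IH]; first by apply: good_empty => // e [].
  apply: (@good_mono _ _ _ _ _ (fun e => (Rs e /\ f e = a) \/ (Rs e /\ f e \in s))).
    by move=> e [Re]; rewrite in_cons => /orP [/eqP ->|]; [left|right].
  exact: good_union.
move/(_ (enum A)); apply: good_mono => e Re; by rewrite mem_enum.
Qed.

Lemma step (A : finType) (R : naRing A) E X (H : @Xhyp A R E X)
  (Xcover : forall f : E -> A, exists i, X i f) (Rs : E -> Prop) k :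
  ~ good R X Rs -> exists (D : E -> Prop) (h : E -> A),
   (forall e, D e -> Rs e) /\ supp_in R h D /\ ~ X k h /\
   ~ good R X (fun e => Rs e /\ ~ D e).
Proof.
move=> Hbad.
have [C HC] := const_bound H Xcover.
have [r Hr] := Xcover (ind R Rs).
pose j := (maxn k (maxn C r)).+2.
have [f [fs fn]] : exists f, supp_in R f Rs /\ ~ X j f.
  apply: NNPP => Hn; apply: Hbad; exists j => g Hg.
  apply: NNPP => Hg'; apply: Hn; by exists g.
have [a Ha] := fibres H Hbad f.
exists (fun e => Rs e /\ f e <> a),
  (fun e => if emi (Rs e) then na_add R (f e) (na_opp R a) else na_zero R).
split; first by move=> e [].
split.
  move=> e He; case: (emi (Rs e)) => // Re.
  have -> : f e = a by apply: NNPP => Hfe; apply: He.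
  exact: na_addrN.
split.
  move=> Hh; apply: fn.
  have -> : f = pw_add R (fun e => if emi (Rs e) then na_add R (f e) (na_opp R a) else na_zero R)
             (pw_mul R (@pw_const A E a) (ind R Rs)).
    apply: functional_extensionality => e; rewrite /pw_add /pw_mul /pw_const /ind.
    case: (emi (Rs e)) => Re.
      by rewrite na_mulr1 -na_addA na_addNr na_addr0.
    by rewrite na_mulr0 na_addr0 fs.
  have L1 : X (maxn C r) (@pw_const A E a) by apply: (Xmono H (leq_maxl _ _)).
  have L2 : X (maxn C r) (ind R Rs) by apply: (Xmono H (leq_maxr _ _)).
  have L3 := Xmul H L1 L2.
  apply: (Xmono H (_ : (maxn k (maxn C r).+1).+1 <= j)); first by rewrite /j; lia.
  apply: Xadd => //; [apply: (Xmono H (leq_maxl _ _) Hh) | apply: (Xmono H (leq_maxr _ _) L3)].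
move=> Hg; apply: Ha; apply: good_mono Hg => e [Re fe]; split => // [[_]]; exact.
Qed.

Fixpoint code (t : seq bool) : nat :=
  match t with [::] => 0 | b :: t' => 2 * code t' + 1 + nat_of_bool b end.

Lemma code_inj : injective code.
Proof.
elim => [|b t IH] [|b' t'] //=; first (by lia); first (by lia).
case: b; case: b' => /= Hc; try lia; congr (_ :: _); apply: IH; lia.
Qed.

Lemma code_size t : size t <= code t.
Proof. elim: t => [|b t IH] //=; lia. Qed.

Fixpoint pfx (x : nat -> bool) k : seq bool :=
  match k with 0 => [::] | k'.+1 => x k' :: pfx x k' end.

Lemma pfx_size x k : size (pfx x k) = k.
Proof. by elim: k => //= k ->. Qed.

Lemma pfx_eq_inv x z k : pfx x k = pfx z k -> forall i, i < k -> x i = z i.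
Proof.
elim: k => [|k IH] //= [e1 e2] i; rewrite ltnS leq_eqVlt => /orP [/eqP ->|] //.
exact: IH.
Qed.

Fixpoint dg (S : nat -> (nat -> bool) -> Prop) n : seq bool :=
  match n with
  | 0 => [::]
  | n'.+1 => (if emi (exists z, S n' z /\ pfx z n' = dg S n' /\ z n' = false)
              then true else false) :: dg S n'
  end.

Lemma diag (S : nat -> (nat -> bool) -> Prop)
  (Scov : forall x, exists m, S m x) (Smono : forall m n x, m <= n -> S m x -> S n x) m0 :
  exists n x z, m0 <= n /\ S n x /\ S n z /\ pfx z n = pfx x n /\ x n = true /\ z n = false.
Proof.
pose xd := fun i => head false (dg S i.+1).
have Hp : forall n, pfx xd n = dg S n by elim => //= n ->.
have [m Hm] := Scov xd.
exists (maxn m m0), xd.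
have Sn := Smono _ _ _ (leq_maxl m m0) Hm.
have Hx : xd (maxn m m0) = if emi (exists z, S (maxn m m0) z /\ pfx z (maxn m m0) = pfx xd (maxn m m0) /\ z (maxn m m0) = false) then true else false.
  by rewrite Hp.
move: Hx; case: (emi _) => [[z [Sz [pz zf]]] Hx | Hn Hx].
  by exists z; rewrite leq_maxr.
by exfalso; apply Hn; exists xd.
Qed.

Fixpoint Rsq E A (sel : (E -> Prop) * nat -> (E -> Prop) * (E -> A)) k : E -> Prop :=
  match k with
  | 0 => fun _ => True
  | k'.+1 => fun e => Rsq sel k' e /\ ~ (sel (Rsq sel k', k'.+2)).1 e
  end.

Theorem mainTheorem6 (A : finType) (R : naRing A) (E : Type)
    (X : nat -> (E -> A) -> Prop)
    (Xincr : forall i f, X i f -> X i.+1 f)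
    (XR : forall i f, Rclos R (X i) f -> X i.+1 f)
    (Xcover : forall f : E -> A, exists i, X i f) :
  exists i, forall f : E -> A, X i f.
Proof.
have H : Xhyp R X by split.
apply: NNPP => Hnot.
have Hbad0 : ~ good R X (fun _ => True).
  by move=> [i Hi]; apply: Hnot; exists i => f; apply: Hi => e; case.
have Hch : forall p : (E -> Prop) * nat, exists q : (E -> Prop) * (E -> A),
    ~ good R X p.1 -> (forall e, q.1 e -> p.1 e) /\ supp_in R q.2 q.1 /\
      ~ X p.2 q.2 /\ ~ good R X (fun e => p.1 e /\ ~ q.1 e).
  move=> [Rs k]; case: (classic (good R X Rs)) => Hg.
    by exists (fun _ => False, fun _ => na_zero R).
  have [D [h Hs]] := step H Xcover k Hg; by exists (D, h).
have [sel Hsel] := choice _ Hch.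
pose D k := (sel (Rsq sel k, k.+2)).1.
pose Hk k := (sel (Rsq sel k, k.+2)).2.
have Rbad : forall k, ~ good R X (Rsq sel k).
  elim => [|k IH] //=; exact: (Hsel (Rsq sel k, k.+2) IH).2.2.2.
have Dsub k e : D k e -> Rsq sel k e := (Hsel (Rsq sel k, k.+2) (Rbad k)).1 e.
have Hsupp k : supp_in R (Hk k) (D k) := (Hsel (Rsq sel k, k.+2) (Rbad k)).2.1.
have Hnx k : ~ X k.+2 (Hk k) := (Hsel (Rsq sel k, k.+2) (Rbad k)).2.2.1.
have Rdec : forall j k e, j <= k -> Rsq sel k e -> Rsq sel j e.
  move=> j k e /subnKC <-; elim: (k - j) => [|d IH]; rewrite ?addn0 // addnS /=.
  by case=> /IH.
have Ddisj : forall j k e, D j e -> D k e -> j = k.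
  move=> j k e Dj Dk; case: (ltngtP j k) => // ljk.
    by have := Rdec j.+1 k e ljk (Dsub _ _ Dk); case.
  by have := Rdec k.+1 j e ljk (Dsub _ _ Dj); case.
pose G e := match emi (exists k, D k e) with
  | left p => Hk (proj1_sig (constructive_indefinite_description _ p)) e
  | right _ => na_zero R end.
have HG : forall t e, D t e -> G e = Hk t e.
  move=> t e Dt; rewrite /G; case: (emi _) => [p|np]; last by exfalso; apply np; exists t.
  case: (constructive_indefinite_description _ p) => k Dk /=.
  by rewrite (Ddisj _ _ _ Dk Dt).
pose B x e := exists k, D (code (pfx x k)) e.
pose Cs x e := exists k, D (code (~~ x k :: pfx x k)) e.
pose S n x := X n (ind R (B x)) /\ X n (ind R (Cs x)).
have [m0 Hm0] := Xcover G.
have Scov : forall x, exists m, S m x.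
  move=> x; have [i Hi] := Xcover (ind R (B x)); have [j Hj] := Xcover (ind R (Cs x)).
  exists (maxn i j); split; [apply: (Xmono H (leq_maxl _ _) Hi) | apply: (Xmono H (leq_maxr _ _) Hj)].
have Smono : forall m n x, m <= n -> S m x -> S n x.
  by move=> m n x mn [h1 h2]; split; apply: (Xmono H mn).
have [n [x [z [mn [Sx [Sz [pzx [xn zn]]]]]]]] := diag Scov Smono m0.
pose t := code (false :: pfx x n).
have tsz : n.+1 <= t.
  by have := code_size (false :: pfx x n); rewrite /= pfx_size.
apply: (Hnx t).
have -> : Hk t = pw_mul R (pw_mul R G (ind R (B z))) (ind R (Cs x)).
  apply: functional_extensionality => e; rewrite /pw_mul /ind.
  case: (classic (D t e)) => Dt.
    rewrite (HG _ _ Dt).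
    case: (emi (B z e)) => [?|nB]; last first.
      by exfalso; apply nB; exists n.+1; rewrite /= zn pzx.
    case: (emi (Cs x e)) => [?|nC]; last first.
      by exfalso; apply nC; exists n; rewrite xn.
    by rewrite !na_mulr1.
  rewrite (Hsupp _ _ Dt).
  case: (emi (B z e)) => [[k Bk]|nB]; last by rewrite na_mulr0 na_mul0r.
  case: (emi (Cs x e)) => [[k' Ck]|nC]; last by rewrite na_mulr0.
  exfalso; apply: Dt.
  have := code_inj (Ddisj _ _ _ Bk Ck).
  case: k Bk => [|k] Bk //= [zk pk].
  have kk : k = k' by have := congr1 size pk; rewrite !pfx_size.
  subst k'.
  case: (ltngtP k n) => [kn|nk|kn].
  - have := pfx_eq_inv pzx kn; rewrite zk; by case: (x k).
  - by have := pfx_eq_inv pk nk; rewrite zn xn.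
  - by move: Ck; rewrite kn xn.
apply: (Xmono H (_ : n.+2 <= t.+2)); first by lia.
apply: (Xmul H); last by apply: (Xmono H (_ : n <= n.+1)); [lia | exact: Sx.2].
apply: (Xmul H); [exact: (Xmono H mn Hm0) | exact: Sz.1].
Qed.
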